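(* The identities (A6) $x\wedge(y\wedge z)\approx y\wedge(z\wedge x)$, (J5') $x\approx (x'\wedge y)'\wedge(x'\wedge y')'$ form a 2-base for the variety $\mathbb{BA}$ of Boolean algebras (in the language $\langle\wedge,{}'\rangle$).
   Context: Algebras are of type $\langle \wedge, {}'\rangle$ with $\wedge$ binary and ${}'$ unary. The variety $\mathbb{BA}$ of Boolean algebras in this language consists of the algebras $\langle B,\wedge,{}'\rangle$ obtained from Boolean algebras by keeping only meet and complement (equivalently, the variety generated by the two-element Boolean algebra with meet and complement). A base for a variety is an independent set of identities (no identity in the set follows from the others) that defines the variety; an $n$-base is a base with exactly $n$ identities. *)

(* Defs.v *)
From Stdlib Require Import List Bool.
Import ListNotations.

Inductive term : Type :=
| Var : nat -> term
| Meet : term -> term -> term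
| Comp : term -> term.

Record algebra : Type := Algebra {
  carrier :> Type;
  ameet : carrier -> carrier -> carrier;
  acomp : carrier -> carrier
}.

Fixpoint eval (A : algebra) (v : nat -> A) (t : term) : A :=
  match t with
  | Var n => v n
  | Meet s u => ameet A (eval A v s) (eval A v u)
  | Comp s => acomp A (eval A v s)
  end.

Definition identity : Type := (term * term)%type.

Definition satisfies (A : algebra) (e : identity) : Prop :=
  forall v : nat -> A, eval A v (fst e) = eval A v (snd e).

Definition models (A : algebra) (E : list identity) : Prop :=
  forall e, In e E -> satisfies A e.

Definition consequence (E : list identity) (e : identity) : Prop :=
  forall A : algebra, models A E -> satisfies A e.

Definition two : algebra := Algebra bool andb negb.

(* The variety BA = the variety generated by the two-element Boolean algebra,
   i.e. the class of algebras satisfying every identity true in [two]. *)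
Definition in_BA (A : algebra) : Prop :=
  forall e : identity, satisfies two e -> satisfies A e.

Definition defines (E : list identity) (V : algebra -> Prop) : Prop :=
  forall A : algebra, models A E <-> V A.

Definition remove_at {X : Type} (i : nat) (l : list X) : list X :=
  firstn i l ++ skipn (S i) l.

Definition independent (E : list identity) : Prop :=
  forall i d, i < length E -> ~ consequence (remove_at i E) (nth i E d).

Definition is_base (E : list identity) (V : algebra -> Prop) : Prop :=
  defines E V /\ independent E.

Definition is_n_base (n : nat) (E : list identity) (V : algebra -> Prop) : Prop :=
  length E = n /\ is_base E V.

Definition x := Var 0.
Definition y := Var 1.
Definition z := Var 2.

Definition A6 : identity := (Meet x (Meet y z), Meet y (Meet z x)).

Definition J5' : identity :=
  (x, Meet (Comp (Meet (Comp x) y)) (Comp (Meet (Comp x) (Comp y)))).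

(* Main.v *)
Require Import Defs.
From Stdlib Require Import List Bool Arith Lia.
Import ListNotations.

Definition HA6 (A : algebra) : Prop :=
  forall a b c : A, ameet A a (ameet A b c) = ameet A b (ameet A c a).
Definition HJ (A : algebra) : Prop :=
  forall a b : A, a = ameet A (acomp A (ameet A (acomp A a) b)) (acomp A (ameet A (acomp A a) (acomp A b))).

Lemma AX_A6 (A : algebra) (h0 : HA6 A) (h1 : HJ A) : forall v0 v1 v2 : A,
  ameet A v0 (ameet A v1 v2) = ameet A v1 (ameet A v2 v0).
Proof. exact h0. Qed.
Lemma AX_J (A : algebra) (h0 : HA6 A) (h1 : HJ A) : forall v0 v1 : A,
  ameet A (acomp A (ameet A (acomp A v0) v1)) (acomp A (ameet A (acomp A v0) (acomp A v1))) = v0.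
Proof. intros; symmetry; apply h1. Qed.
Lemma comp_inj (A : algebra) (h1 : HJ A) (a b : A) : acomp A a = acomp A b -> a = b.
Proof.
  intro H. pose proof (h1 a b) as Ha. pose proof (h1 b b) as Hb.
  rewrite H in Ha. rewrite Ha. rewrite <- Hb. reflexivity.
Qed.

Lemma S1_E4 (A : algebra) (h0 : HA6 A) (h1 : HJ A) : forall v0 v1 v2 : A, (ameet A (acomp A (ameet A (acomp A v0) v1)) (ameet A (acomp A (ameet A (acomp A v0) (acomp A v1))) v2)) = (ameet A v2 v0).
Proof. intros v0 v1 v2. exact (eq_trans (AX_A6 A h0 h1 (acomp A (ameet A (acomp A v0) v1)) (acomp A (ameet A (acomp A v0) (acomp A v1))) v2) (eq_trans (AX_A6 A h0 h1 (acomp A (ameet A (acomp A v0) (acomp A v1))) v2 (acomp A (ameet A (acomp A v0) v1))) (f_equal (fun Z : A => (ameet A v2 Z)) (AX_J A h0 h1 v0 v1)))). Qed.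

Lemma S1_E5 (A : algebra) (h0 : HA6 A) (h1 : HJ A) : forall v0 v1 : A, (ameet A (acomp A (ameet A (acomp A v0) (acomp A (acomp A v1)))) v0) = (ameet A (acomp A (ameet A (acomp A v0) v1)) v0).
Proof. intros v0 v1. exact (eq_trans (eq_sym (S1_E4 A h0 h1 v0 v1 (acomp A (ameet A (acomp A v0) (acomp A (acomp A v1)))))) (f_equal (fun Z : A => (ameet A (acomp A (ameet A (acomp A v0) v1)) Z)) (AX_J A h0 h1 v0 (acomp A v1)))). Qed.

Lemma S1_E11 (A : algebra) (h0 : HA6 A) (h1 : HJ A) : forall v0 v1 v2 : A, (ameet A (ameet A (acomp A (ameet A (acomp A v0) (acomp A (acomp A v1)))) v2) v0) = (ameet A v0 (ameet A (acomp A (ameet A (acomp A v0) v1)) v2)).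
Proof. intros v0 v1 v2. exact (eq_trans (eq_sym (S1_E4 A h0 h1 v0 v1 (ameet A (acomp A (ameet A (acomp A v0) (acomp A (acomp A v1)))) v2))) (eq_trans (f_equal (fun Z : A => (ameet A (acomp A (ameet A (acomp A v0) v1)) Z)) (S1_E4 A h0 h1 v0 (acomp A v1) v2)) (eq_sym (AX_A6 A h0 h1 v0 (acomp A (ameet A (acomp A v0) v1)) v2)))). Qed.

Lemma S1_E14 (A : algebra) (h0 : HA6 A) (h1 : HJ A) : forall v0 v1 v2 : A, (ameet A v0 (ameet A v1 (acomp A (ameet A (acomp A v0) (acomp A (acomp A v2)))))) = (ameet A v1 (ameet A (acomp A (ameet A (acomp A v0) v2)) v0)).
Proof. intros v0 v1 v2. exact (eq_trans (AX_A6 A h0 h1 v0 v1 (acomp A (ameet A (acomp A v0) (acomp A (acomp A v2))))) (f_equal (fun Z : A => (ameet A v1 Z)) (S1_E5 A h0 h1 v0 v2))). Qed.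

Lemma S1_E36 (A : algebra) (h0 : HA6 A) (h1 : HJ A) : forall v0 v1 v2 : A, (ameet A v0 (ameet A (acomp A (ameet A (acomp A v0) v1)) (ameet A (acomp A (ameet A (acomp A v0) (acomp A (acomp A (acomp A v1))))) v2))) = (ameet A (ameet A v2 v0) v0).
Proof. intros v0 v1 v2. exact (eq_trans (eq_sym (S1_E11 A h0 h1 v0 v1 (ameet A (acomp A (ameet A (acomp A v0) (acomp A (acomp A (acomp A v1))))) v2))) (f_equal (fun Z : A => (ameet A Z v0)) (S1_E4 A h0 h1 v0 (acomp A (acomp A v1)) v2))). Qed.

Lemma S1_E62 (A : algebra) (h0 : HA6 A) (h1 : HJ A) : forall v0 v1 v2 : A, (ameet A v0 (ameet A v1 (ameet A (acomp A (ameet A (acomp A v0) v2)) (acomp A (ameet A (acomp A v0) (acomp A (acomp A (acomp A v2)))))))) = (ameet A (ameet A v1 v0) v0).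
Proof. intros v0 v1 v2. exact (eq_trans (f_equal (fun Z : A => (ameet A v0 Z)) (AX_A6 A h0 h1 v1 (acomp A (ameet A (acomp A v0) v2)) (acomp A (ameet A (acomp A v0) (acomp A (acomp A (acomp A v2))))))) (S1_E36 A h0 h1 v0 v2 v1)). Qed.

Lemma S1_E65 (A : algebra) (h0 : HA6 A) (h1 : HJ A) : forall v0 v1 v2 : A, (ameet A v0 (ameet A (ameet A (acomp A (ameet A (acomp A v1) v2)) (acomp A (ameet A (acomp A v1) (acomp A (acomp A (acomp A v2)))))) v1)) = (ameet A (ameet A v0 v1) v1).
Proof. intros v0 v1 v2. exact (eq_trans (eq_sym (AX_A6 A h0 h1 v1 v0 (ameet A (acomp A (ameet A (acomp A v1) v2)) (acomp A (ameet A (acomp A v1) (acomp A (acomp A (acomp A v2)))))))) (S1_E62 A h0 h1 v1 v0 v2)). Qed.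

Lemma S1_E122 (A : algebra) (h0 : HA6 A) (h1 : HJ A) : forall v0 v1 : A, (ameet A (ameet A v0 v1) v1) = (ameet A v0 (ameet A v1 v1)).
Proof. intros v0 v1. exact (eq_trans (eq_sym (S1_E65 A h0 h1 v0 v1 (acomp A (acomp A v0)))) (eq_trans (f_equal (fun Z : A => (ameet A v0 Z)) (S1_E11 A h0 h1 v1 v0 (acomp A (ameet A (acomp A v1) (acomp A (acomp A (acomp A (acomp A (acomp A v0))))))))) (eq_trans (f_equal (fun Z : A => (ameet A v0 Z)) (S1_E14 A h0 h1 v1 (acomp A (ameet A (acomp A v1) v0)) (acomp A (acomp A (acomp A v0))))) (eq_trans (f_equal (fun Z : A => (ameet A v0 Z)) (eq_sym (AX_A6 A h0 h1 v1 (acomp A (ameet A (acomp A v1) v0)) (acomp A (ameet A (acomp A v1) (acomp A (acomp A (acomp A v0)))))))) (eq_trans (f_equal (fun Z : A => (ameet A v0 Z)) (S1_E14 A h0 h1 v1 (acomp A (ameet A (acomp A v1) v0)) (acomp A v0))) (eq_trans (f_equal (fun Z : A => (ameet A v0 Z)) (eq_sym (AX_A6 A h0 h1 v1 (acomp A (ameet A (acomp A v1) v0)) (acomp A (ameet A (acomp A v1) (acomp A v0)))))) (f_equal (fun Z : A => (ameet A v0 (ameet A v1 Z))) (AX_J A h0 h1 v1 v0)))))))). Qed.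

Lemma S1_E162 (A : algebra) (h0 : HA6 A) (h1 : HJ A) : forall v0 v1 v2 : A, (ameet A v0 (ameet A v1 (ameet A v2 v2))) = (ameet A v2 (ameet A v0 (ameet A v1 v2))).
Proof. intros v0 v1 v2. exact (eq_trans (f_equal (fun Z : A => (ameet A v0 Z)) (eq_sym (S1_E122 A h0 h1 v1 v2))) (eq_sym (AX_A6 A h0 h1 v2 v0 (ameet A v1 v2)))). Qed.

Lemma S1_E164 (A : algebra) (h0 : HA6 A) (h1 : HJ A) : forall v0 v1 : A, (ameet A (ameet A v0 v0) v1) = (ameet A v0 (ameet A v0 v1)).
Proof. intros v0 v1. exact (eq_trans (eq_sym (S1_E4 A h0 h1 v1 v0 (ameet A v0 v0))) (eq_trans (S1_E162 A h0 h1 (acomp A (ameet A (acomp A v1) v0)) (acomp A (ameet A (acomp A v1) (acomp A v0))) v0) (f_equal (fun Z : A => (ameet A v0 Z)) (S1_E4 A h0 h1 v1 v0 v0)))). Qed.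

Lemma L_ra (A : algebra) (h0 : HA6 A) (h1 : HJ A) : forall v0 v1 : A, (ameet A (ameet A v0 v1) v1) = (ameet A v0 (ameet A v1 v1)).
Proof. intros v0 v1. exact (S1_E122 A h0 h1 v0 v1). Qed.

Lemma L_la (A : algebra) (h0 : HA6 A) (h1 : HJ A) : forall v0 v1 : A, (ameet A (ameet A v0 v0) v1) = (ameet A v0 (ameet A v0 v1)).
Proof. intros v0 v1. exact (S1_E164 A h0 h1 v0 v1). Qed.

Lemma S3_E4 (A : algebra) (h0 : HA6 A) (h1 : HJ A) : forall v0 v1 v2 : A, (ameet A (acomp A (ameet A v0 (ameet A (acomp A v1) v2))) (acomp A (ameet A (acomp A v1) (acomp A (ameet A v2 v0))))) = v1.
Proof. intros v0 v1 v2. exact (eq_trans (f_equal (fun Z : A => (ameet A (acomp A Z) (acomp A (ameet A (acomp A v1) (acomp A (ameet A v2 v0)))))) (AX_A6 A h0 h1 v0 (acomp A v1) v2)) (AX_J A h0 h1 v1 (ameet A v2 v0))). Qed.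

Lemma S3_E6 (A : algebra) (h0 : HA6 A) (h1 : HJ A) : forall v0 v1 v2 : A, (ameet A (acomp A (ameet A (acomp A v0) v1)) (ameet A (acomp A (ameet A (acomp A v0) (acomp A v1))) v2)) = (ameet A v2 v0).
Proof. intros v0 v1 v2. exact (eq_trans (AX_A6 A h0 h1 (acomp A (ameet A (acomp A v0) v1)) (acomp A (ameet A (acomp A v0) (acomp A v1))) v2) (eq_trans (AX_A6 A h0 h1 (acomp A (ameet A (acomp A v0) (acomp A v1))) v2 (acomp A (ameet A (acomp A v0) v1))) (f_equal (fun Z : A => (ameet A v2 Z)) (AX_J A h0 h1 v0 v1)))). Qed.

Lemma S3_E12 (A : algebra) (h0 : HA6 A) (h1 : HJ A) : forall v0 v1 v2 : A, (ameet A v0 (ameet A v1 (ameet A v2 v2))) = (ameet A v2 (ameet A v2 (ameet A v0 v1))).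
Proof. intros v0 v1 v2. exact (eq_trans (eq_sym (AX_A6 A h0 h1 (ameet A v2 v2) v0 v1)) (L_la A h0 h1 v2 (ameet A v0 v1))). Qed.

Lemma S3_E15 (A : algebra) (h0 : HA6 A) (h1 : HJ A) : forall v0 v1 : A, (ameet A (acomp A v0) (acomp A (ameet A (acomp A (ameet A (acomp A v0) v1)) (acomp A (acomp A (ameet A (acomp A v0) (acomp A v1))))))) = (ameet A (acomp A v0) v1).
Proof. intros v0 v1. exact (eq_trans (f_equal (fun Z : A => (ameet A (acomp A Z) (acomp A (ameet A (acomp A (ameet A (acomp A v0) v1)) (acomp A (acomp A (ameet A (acomp A v0) (acomp A v1)))))))) (eq_sym (AX_J A h0 h1 v0 v1))) (AX_J A h0 h1 (ameet A (acomp A v0) v1) (acomp A (ameet A (acomp A v0) (acomp A v1))))). Qed.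

Lemma S3_E18 (A : algebra) (h0 : HA6 A) (h1 : HJ A) : forall v0 v1 : A, (ameet A (acomp A (ameet A (acomp A v0) (acomp A v1))) v0) = (ameet A v0 (acomp A (ameet A (acomp A v0) (acomp A v1)))).
Proof. intros v0 v1. exact (eq_trans (eq_sym (S3_E6 A h0 h1 v0 v1 (acomp A (ameet A (acomp A v0) (acomp A v1))))) (eq_trans (eq_sym (L_ra A h0 h1 (acomp A (ameet A (acomp A v0) v1)) (acomp A (ameet A (acomp A v0) (acomp A v1))))) (f_equal (fun Z : A => (ameet A Z (acomp A (ameet A (acomp A v0) (acomp A v1))))) (AX_J A h0 h1 v0 v1)))). Qed.

Lemma S3_E125 (A : algebra) (h0 : HA6 A) (h1 : HJ A) : forall v0 v1 v2 : A, (ameet A v0 (ameet A v1 (ameet A v0 v2))) = (ameet A v2 (ameet A v1 (ameet A v0 v0))).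
Proof. intros v0 v1 v2. exact (eq_trans (f_equal (fun Z : A => (ameet A v0 Z)) (AX_A6 A h0 h1 v1 v0 v2)) (eq_sym (S3_E12 A h0 h1 v2 v1 v0))). Qed.

Lemma S3_E171 (A : algebra) (h0 : HA6 A) (h1 : HJ A) : forall v0 v1 : A, (ameet A (acomp A (ameet A (acomp A v0) v1)) v0) = (ameet A v0 (acomp A (ameet A (acomp A v0) v1))).
Proof. intros v0 v1. exact (eq_trans (f_equal (fun Z : A => (ameet A (acomp A Z) v0)) (eq_sym (S3_E15 A h0 h1 v0 v1))) (eq_trans (S3_E18 A h0 h1 v0 (ameet A (acomp A (ameet A (acomp A v0) v1)) (acomp A (acomp A (ameet A (acomp A v0) (acomp A v1)))))) (f_equal (fun Z : A => (ameet A v0 (acomp A Z))) (S3_E15 A h0 h1 v0 v1)))). Qed.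

Lemma S3_E742 (A : algebra) (h0 : HA6 A) (h1 : HJ A) : forall v0 v1 v2 : A, (ameet A (ameet A (acomp A (ameet A (acomp A v0) v1)) v2) v0) = (ameet A v2 (ameet A v0 (acomp A (ameet A (acomp A v0) v1)))).
Proof. intros v0 v1 v2. exact (eq_trans (eq_sym (S3_E6 A h0 h1 v0 v1 (ameet A (acomp A (ameet A (acomp A v0) v1)) v2))) (eq_trans (S3_E125 A h0 h1 (acomp A (ameet A (acomp A v0) v1)) (acomp A (ameet A (acomp A v0) (acomp A v1))) v2) (eq_trans (f_equal (fun Z : A => (ameet A v2 Z)) (AX_A6 A h0 h1 (acomp A (ameet A (acomp A v0) (acomp A v1))) (acomp A (ameet A (acomp A v0) v1)) (acomp A (ameet A (acomp A v0) v1)))) (eq_trans (f_equal (fun Z : A => (ameet A v2 (ameet A (acomp A (ameet A (acomp A v0) v1)) Z))) (AX_J A h0 h1 v0 v1)) (f_equal (fun Z : A => (ameet A v2 Z)) (S3_E171 A h0 h1 v0 v1)))))). Qed.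

Lemma S3_E743 (A : algebra) (h0 : HA6 A) (h1 : HJ A) : forall v0 v1 : A, (ameet A v0 v1) = (ameet A v1 v0).
Proof. intros v0 v1. exact (eq_trans (f_equal (fun Z : A => (ameet A Z v1)) (eq_sym (S3_E4 A h0 h1 (acomp A v1) v0 v0))) (eq_trans (S3_E742 A h0 h1 v1 (ameet A (acomp A v0) v0) (acomp A (ameet A (acomp A v0) (acomp A (ameet A v0 (acomp A v1)))))) (eq_trans (AX_A6 A h0 h1 (acomp A (ameet A (acomp A v0) (acomp A (ameet A v0 (acomp A v1))))) v1 (acomp A (ameet A (acomp A v1) (ameet A (acomp A v0) v0)))) (f_equal (fun Z : A => (ameet A v1 Z)) (S3_E4 A h0 h1 (acomp A v1) v0 v0))))). Qed.

Lemma L_comm (A : algebra) (h0 : HA6 A) (h1 : HJ A) : forall v0 v1 : A, (ameet A v0 v1) = (ameet A v1 v0).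
Proof. intros v0 v1. exact (eq_sym (S3_E743 A h0 h1 v1 v0)). Qed.

Lemma L_assoc (A : algebra) (h0 : HA6 A) (h1 : HJ A) : forall v0 v1 v2 : A, (ameet A (ameet A v0 v1) v2) = (ameet A v0 (ameet A v1 v2)).
Proof. intros v0 v1 v2. exact (eq_trans (S3_E743 A h0 h1 (ameet A v0 v1) v2) (AX_A6 A h0 h1 v2 v0 v1)). Qed.

Lemma S4_E4 (A : algebra) (h0 : HA6 A) (h1 : HJ A) : forall v0 v1 v2 : A, (ameet A (acomp A (ameet A v0 (ameet A (acomp A v1) v2))) (acomp A (ameet A (acomp A v1) (acomp A (ameet A v2 v0))))) = v1.
Proof. intros v0 v1 v2. exact (eq_trans (f_equal (fun Z : A => (ameet A (acomp A Z) (acomp A (ameet A (acomp A v1) (acomp A (ameet A v2 v0)))))) (AX_A6 A h0 h1 v0 (acomp A v1) v2)) (AX_J A h0 h1 v1 (ameet A v2 v0))). Qed.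

Lemma S4_E5 (A : algebra) (h0 : HA6 A) (h1 : HJ A) : forall v0 v1 v2 : A, (ameet A v0 (ameet A v1 v2)) = (ameet A v1 (ameet A v0 v2)).
Proof. intros v0 v1 v2. exact (eq_trans (f_equal (fun Z : A => (ameet A v0 Z)) (L_comm A h0 h1 v1 v2)) (eq_sym (AX_A6 A h0 h1 v1 v0 v2))). Qed.

Lemma S4_E10 (A : algebra) (h0 : HA6 A) (h1 : HJ A) : forall v0 v1 v2 : A, (ameet A v0 (ameet A v1 v2)) = (ameet A v0 (ameet A v2 v1)).
Proof. intros v0 v1 v2. exact (eq_trans (eq_sym (AX_A6 A h0 h1 v2 v0 v1)) (eq_sym (S4_E5 A h0 h1 v0 v2 v1))). Qed.

Lemma S4_E12 (A : algebra) (h0 : HA6 A) (h1 : HJ A) : forall v0 v1 : A, (ameet A (acomp A (ameet A v0 (acomp A v1))) (acomp A (ameet A (acomp A v1) (acomp A v0)))) = v1.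
Proof. intros v0 v1. exact (eq_trans (f_equal (fun Z : A => (ameet A (acomp A Z) (acomp A (ameet A (acomp A v1) (acomp A v0))))) (L_comm A h0 h1 v0 (acomp A v1))) (AX_J A h0 h1 v1 v0)). Qed.

Lemma S4_E13 (A : algebra) (h0 : HA6 A) (h1 : HJ A) : forall v0 v1 : A, (ameet A (acomp A (ameet A (acomp A v0) v1)) (acomp A (ameet A (acomp A v1) (acomp A v0)))) = v0.
Proof. intros v0 v1. exact (eq_trans (f_equal (fun Z : A => (ameet A (acomp A (ameet A (acomp A v0) v1)) (acomp A Z))) (L_comm A h0 h1 (acomp A v1) (acomp A v0))) (AX_J A h0 h1 v0 v1)). Qed.

Lemma S4_E15 (A : algebra) (h0 : HA6 A) (h1 : HJ A) : forall v0 v1 : A, (ameet A (acomp A v0) (acomp A (ameet A (acomp A v1) (ameet A (acomp A v0) (acomp A (ameet A (acomp A v0) v1)))))) = (ameet A (acomp A v0) v1).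
Proof. intros v0 v1. exact (eq_trans (f_equal (fun Z : A => (ameet A (acomp A v0) (acomp A Z))) (eq_sym (S4_E10 A h0 h1 (acomp A v1) (acomp A (ameet A (acomp A v0) v1)) (acomp A v0)))) (eq_trans (eq_sym (L_comm A h0 h1 (acomp A (ameet A (acomp A v1) (ameet A (acomp A (ameet A (acomp A v0) v1)) (acomp A v0)))) (acomp A v0))) (eq_trans (f_equal (fun Z : A => (ameet A (acomp A (ameet A (acomp A v1) (ameet A (acomp A (ameet A (acomp A v0) v1)) (acomp A v0)))) (acomp A Z))) (eq_sym (AX_J A h0 h1 v0 v1))) (S4_E4 A h0 h1 (acomp A v1) (ameet A (acomp A v0) v1) (acomp A v0))))). Qed.

Lemma S4_E21 (A : algebra) (h0 : HA6 A) (h1 : HJ A) : forall v0 v1 : A, (ameet A (acomp A (ameet A v0 (acomp A v1))) (acomp A (ameet A (acomp A v0) (acomp A v1)))) = v1.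
Proof. intros v0 v1. exact (eq_trans (f_equal (fun Z : A => (ameet A (acomp A (ameet A v0 (acomp A v1))) (acomp A Z))) (L_comm A h0 h1 (acomp A v0) (acomp A v1))) (S4_E12 A h0 h1 v0 v1)). Qed.

Lemma S4_E23 (A : algebra) (h0 : HA6 A) (h1 : HJ A) : forall v0 v1 v2 : A, (ameet A (acomp A (ameet A (acomp A v0) v1)) (ameet A v2 (acomp A (ameet A (acomp A v0) (acomp A v1))))) = (ameet A v2 v0).
Proof. intros v0 v1 v2. exact (eq_trans (S4_E5 A h0 h1 (acomp A (ameet A (acomp A v0) v1)) v2 (acomp A (ameet A (acomp A v0) (acomp A v1)))) (f_equal (fun Z : A => (ameet A v2 Z)) (AX_J A h0 h1 v0 v1))). Qed.

Lemma S4_E25 (A : algebra) (h0 : HA6 A) (h1 : HJ A) : forall v0 v1 : A, (ameet A v0 (acomp A (ameet A (acomp A v1) v0))) = (ameet A v1 (acomp A (ameet A (acomp A v0) v1))).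
Proof. intros v0 v1. exact (eq_trans (eq_sym (L_comm A h0 h1 (acomp A (ameet A (acomp A v1) v0)) v0)) (eq_trans (f_equal (fun Z : A => (ameet A (acomp A (ameet A (acomp A v1) v0)) Z)) (eq_sym (S4_E13 A h0 h1 v0 v1))) (eq_trans (S4_E23 A h0 h1 v1 v0 (acomp A (ameet A (acomp A v0) v1))) (L_comm A h0 h1 (acomp A (ameet A (acomp A v0) v1)) v1)))). Qed.

Lemma S4_E26 (A : algebra) (h0 : HA6 A) (h1 : HJ A) : forall v0 v1 : A, (ameet A v0 (acomp A (ameet A (acomp A v1) v0))) = (ameet A v1 (acomp A (ameet A v1 (acomp A v0)))).
Proof. intros v0 v1. exact (eq_trans (eq_sym (L_comm A h0 h1 (acomp A (ameet A (acomp A v1) v0)) v0)) (eq_trans (f_equal (fun Z : A => (ameet A (acomp A (ameet A (acomp A v1) v0)) Z)) (eq_sym (S4_E21 A h0 h1 v1 v0))) (eq_trans (S4_E23 A h0 h1 v1 v0 (acomp A (ameet A v1 (acomp A v0)))) (L_comm A h0 h1 (acomp A (ameet A v1 (acomp A v0))) v1)))). Qed.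

Lemma S4_E28 (A : algebra) (h0 : HA6 A) (h1 : HJ A) : forall v0 v1 : A, (ameet A v0 (acomp A (ameet A (acomp A v1) v0))) = (ameet A v0 (acomp A (ameet A v0 (acomp A v1)))).
Proof. intros v0 v1. exact (eq_trans (S4_E25 A h0 h1 v0 v1) (S4_E26 A h0 h1 v1 v0)). Qed.

Lemma S4_E109 (A : algebra) (h0 : HA6 A) (h1 : HJ A) : forall v0 v1 v2 : A, (ameet A v0 (ameet A v1 (acomp A (ameet A (acomp A v2) v1)))) = (ameet A v2 (ameet A v0 (acomp A (ameet A (acomp A v1) v2)))).
Proof. intros v0 v1 v2. exact (eq_trans (f_equal (fun Z : A => (ameet A v0 Z)) (S4_E25 A h0 h1 v1 v2)) (eq_sym (S4_E5 A h0 h1 v2 v0 (acomp A (ameet A (acomp A v1) v2))))). Qed.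

Lemma S4_E110 (A : algebra) (h0 : HA6 A) (h1 : HJ A) : forall v0 v1 : A, (ameet A v0 (ameet A (acomp A (ameet A (acomp A v0) v1)) (acomp A (ameet A (acomp A (acomp A v1)) v0)))) = (ameet A (acomp A v1) v0).
Proof. intros v0 v1. exact (eq_trans (eq_sym (S4_E10 A h0 h1 v0 (acomp A (ameet A (acomp A (acomp A v1)) v0)) (acomp A (ameet A (acomp A v0) v1)))) (eq_trans (eq_sym (AX_A6 A h0 h1 (acomp A (ameet A (acomp A v0) v1)) v0 (acomp A (ameet A (acomp A (acomp A v1)) v0)))) (eq_trans (f_equal (fun Z : A => (ameet A (acomp A (ameet A (acomp A v0) v1)) Z)) (S4_E25 A h0 h1 v0 (acomp A v1))) (S4_E23 A h0 h1 v0 v1 (acomp A v1))))). Qed.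

Lemma S4_E111 (A : algebra) (h0 : HA6 A) (h1 : HJ A) : forall v0 : A, (ameet A (acomp A v0) (acomp A (acomp A v0))) = (ameet A v0 (acomp A v0)).
Proof. intros v0. exact (eq_trans (eq_sym (L_comm A h0 h1 (acomp A (acomp A v0)) (acomp A v0))) (eq_trans (eq_sym (S4_E110 A h0 h1 (acomp A v0) (acomp A v0))) (eq_trans (f_equal (fun Z : A => (ameet A (acomp A v0) Z)) (S4_E21 A h0 h1 (acomp A (acomp A v0)) v0)) (L_comm A h0 h1 (acomp A v0) v0)))). Qed.

Lemma S4_E115 (A : algebra) (h0 : HA6 A) (h1 : HJ A) : forall v0 : A, (ameet A (acomp A (ameet A v0 (acomp A v0))) (acomp A (ameet A v0 (acomp A (acomp A v0))))) = (acomp A v0).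
Proof. intros v0. exact (eq_trans (f_equal (fun Z : A => (ameet A (acomp A (ameet A v0 (acomp A v0))) (acomp A Z))) (eq_sym (L_comm A h0 h1 (acomp A (acomp A v0)) v0))) (eq_trans (eq_sym (L_comm A h0 h1 (acomp A (ameet A (acomp A (acomp A v0)) v0)) (acomp A (ameet A v0 (acomp A v0))))) (eq_trans (f_equal (fun Z : A => (ameet A (acomp A (ameet A (acomp A (acomp A v0)) v0)) (acomp A Z))) (eq_sym (S4_E111 A h0 h1 v0))) (S4_E13 A h0 h1 (acomp A v0) v0)))). Qed.

Lemma S4_E116 (A : algebra) (h0 : HA6 A) (h1 : HJ A) : forall v0 : A, (acomp A (acomp A v0)) = v0.
Proof. intros v0. exact (eq_trans (eq_sym (S4_E115 A h0 h1 (acomp A v0))) (AX_J A h0 h1 v0 (acomp A (acomp A v0)))). Qed.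

Lemma S4_E122 (A : algebra) (h0 : HA6 A) (h1 : HJ A) : forall v0 v1 : A, (ameet A (acomp A (ameet A v0 v1)) (acomp A (ameet A v0 (acomp A v1)))) = (acomp A v0).
Proof. intros v0 v1. exact (eq_trans (f_equal (fun Z : A => (ameet A (acomp A (ameet A v0 v1)) (acomp A (ameet A Z (acomp A v1))))) (eq_sym (S4_E116 A h0 h1 v0))) (eq_trans (f_equal (fun Z : A => (ameet A (acomp A (ameet A Z v1)) (acomp A (ameet A (acomp A (acomp A v0)) (acomp A v1))))) (eq_sym (S4_E116 A h0 h1 v0))) (AX_J A h0 h1 (acomp A v0) v1))). Qed.

Lemma S4_E124 (A : algebra) (h0 : HA6 A) (h1 : HJ A) : forall v0 v1 : A, (ameet A (acomp A (ameet A v0 v1)) (acomp A (ameet A v1 (acomp A v0)))) = (acomp A v1).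
Proof. intros v0 v1. exact (eq_trans (f_equal (fun Z : A => (ameet A (acomp A Z) (acomp A (ameet A v1 (acomp A v0))))) (L_comm A h0 h1 v0 v1)) (S4_E122 A h0 h1 v1 v0)). Qed.

Lemma S4_E126 (A : algebra) (h0 : HA6 A) (h1 : HJ A) : forall v0 v1 : A, (ameet A (acomp A (ameet A v0 v1)) (acomp A (ameet A (acomp A v1) v0))) = (acomp A v0).
Proof. intros v0 v1. exact (eq_trans (f_equal (fun Z : A => (ameet A (acomp A (ameet A v0 v1)) (acomp A Z))) (L_comm A h0 h1 (acomp A v1) v0)) (S4_E122 A h0 h1 v0 v1)). Qed.

Lemma S4_E128 (A : algebra) (h0 : HA6 A) (h1 : HJ A) : forall v0 v1 : A, (ameet A (acomp A (ameet A v0 v1)) (acomp A (ameet A (acomp A v0) v1))) = (acomp A v1).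
Proof. intros v0 v1. exact (eq_trans (f_equal (fun Z : A => (ameet A (acomp A (ameet A v0 v1)) (acomp A Z))) (L_comm A h0 h1 (acomp A v0) v1)) (S4_E124 A h0 h1 v0 v1)). Qed.

Lemma S4_E131 (A : algebra) (h0 : HA6 A) (h1 : HJ A) : forall v0 v1 : A, (ameet A v0 (acomp A (ameet A v0 v1))) = (ameet A v0 (acomp A (ameet A v1 v0))).
Proof. intros v0 v1. exact (eq_trans (f_equal (fun Z : A => (ameet A v0 (acomp A (ameet A v0 Z)))) (eq_sym (S4_E116 A h0 h1 v1))) (eq_trans (eq_sym (S4_E28 A h0 h1 v0 (acomp A v1))) (f_equal (fun Z : A => (ameet A v0 (acomp A (ameet A Z v0)))) (S4_E116 A h0 h1 v1)))). Qed.

Lemma S4_E136 (A : algebra) (h0 : HA6 A) (h1 : HJ A) : forall v0 v1 : A, (ameet A v0 (acomp A (ameet A v1 v0))) = (ameet A (acomp A v1) (acomp A (ameet A (acomp A v0) (acomp A v1)))).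
Proof. intros v0 v1. exact (eq_trans (f_equal (fun Z : A => (ameet A v0 (acomp A (ameet A Z v0)))) (eq_sym (S4_E116 A h0 h1 v1))) (eq_sym (S4_E25 A h0 h1 (acomp A v1) v0))). Qed.

Lemma S4_E154 (A : algebra) (h0 : HA6 A) (h1 : HJ A) : forall v0 v1 v2 : A, (ameet A (acomp A (ameet A v0 (ameet A v1 v2))) (acomp A (ameet A (acomp A (ameet A v2 v0)) v1))) = (acomp A v1).
Proof. intros v0 v1 v2. exact (eq_trans (f_equal (fun Z : A => (ameet A (acomp A Z) (acomp A (ameet A (acomp A (ameet A v2 v0)) v1)))) (AX_A6 A h0 h1 v0 v1 v2)) (S4_E126 A h0 h1 v1 (ameet A v2 v0))). Qed.

Lemma S4_E164 (A : algebra) (h0 : HA6 A) (h1 : HJ A) : forall v0 v1 : A, (ameet A v0 (acomp A v0)) = (ameet A v1 (acomp A v1)).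
Proof. intros v0 v1. exact (eq_trans (f_equal (fun Z : A => (ameet A v0 Z)) (eq_sym (S4_E126 A h0 h1 v0 v1))) (eq_trans (eq_sym (S4_E109 A h0 h1 (acomp A (ameet A v0 v1)) v1 v0)) (eq_trans (AX_A6 A h0 h1 (acomp A (ameet A v0 v1)) v1 (acomp A (ameet A (acomp A v0) v1))) (eq_trans (S4_E10 A h0 h1 v1 (acomp A (ameet A (acomp A v0) v1)) (acomp A (ameet A v0 v1))) (f_equal (fun Z : A => (ameet A v1 Z)) (S4_E128 A h0 h1 v0 v1)))))). Qed.

Lemma S4_E165 (A : algebra) (h0 : HA6 A) (h1 : HJ A) : forall v0 v1 v2 : A, (ameet A v0 (ameet A v1 (acomp A v1))) = (ameet A v2 (ameet A (acomp A v2) v0)).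
Proof. intros v0 v1 v2. exact (eq_trans (f_equal (fun Z : A => (ameet A v0 Z)) (S4_E164 A h0 h1 v1 v2)) (eq_trans (eq_sym (AX_A6 A h0 h1 (acomp A v2) v0 v2)) (eq_sym (AX_A6 A h0 h1 v2 (acomp A v2) v0)))). Qed.

Lemma S4_E166 (A : algebra) (h0 : HA6 A) (h1 : HJ A) : forall v0 v1 v2 : A, (ameet A v0 (ameet A v1 (acomp A (ameet A v0 v1)))) = (ameet A v2 (acomp A v2)).
Proof. intros v0 v1 v2. exact (eq_trans (eq_sym (L_assoc A h0 h1 v0 v1 (acomp A (ameet A v0 v1)))) (eq_sym (S4_E164 A h0 h1 v2 (ameet A v0 v1)))). Qed.

Lemma S4_E169 (A : algebra) (h0 : HA6 A) (h1 : HJ A) : forall v0 v1 : A, (ameet A (acomp A (ameet A v0 v0)) (acomp A (ameet A v1 (acomp A v1)))) = (acomp A v0).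
Proof. intros v0 v1. exact (eq_trans (f_equal (fun Z : A => (ameet A (acomp A (ameet A v0 v0)) (acomp A Z))) (S4_E164 A h0 h1 v1 v0)) (S4_E122 A h0 h1 v0 v0)). Qed.

Lemma S4_E170 (A : algebra) (h0 : HA6 A) (h1 : HJ A) : forall v0 v1 : A, (ameet A v0 (ameet A v0 (acomp A v0))) = (ameet A v1 (acomp A v1)).
Proof. intros v0 v1. exact (eq_trans (eq_sym (AX_A6 A h0 h1 (acomp A v0) v0 v0)) (eq_trans (eq_sym (L_comm A h0 h1 (ameet A v0 v0) (acomp A v0))) (eq_trans (f_equal (fun Z : A => (ameet A (ameet A v0 v0) Z)) (eq_sym (S4_E169 A h0 h1 v0 (ameet A v0 v0)))) (S4_E166 A h0 h1 (ameet A v0 v0) (acomp A (ameet A v0 v0)) v1)))). Qed.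

Lemma S4_E171 (A : algebra) (h0 : HA6 A) (h1 : HJ A) : forall v0 v1 v2 : A, (ameet A v0 (ameet A v1 (acomp A v1))) = (ameet A v2 (acomp A v2)).
Proof. intros v0 v1 v2. exact (eq_trans (f_equal (fun Z : A => (ameet A v0 Z)) (S4_E164 A h0 h1 v1 v0)) (S4_E170 A h0 h1 v0 v2)). Qed.

Lemma S4_E172 (A : algebra) (h0 : HA6 A) (h1 : HJ A) : forall v0 v1 v2 : A, (ameet A v0 (ameet A (acomp A v0) v1)) = (ameet A v2 (acomp A v2)).
Proof. intros v0 v1 v2. exact (eq_trans (eq_sym (S4_E165 A h0 h1 v1 v1 v0)) (S4_E170 A h0 h1 v1 v2)). Qed.

Lemma S4_E250 (A : algebra) (h0 : HA6 A) (h1 : HJ A) : forall v0 v1 : A, (ameet A v0 (ameet A (acomp A v1) (acomp A (ameet A v0 (ameet A (acomp A v1) (ameet A (acomp A v1) (acomp A v0))))))) = (ameet A (acomp A v1) (acomp A (ameet A (acomp A v1) (acomp A v0)))).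
Proof. intros v0 v1. exact (eq_trans (f_equal (fun Z : A => (ameet A v0 (ameet A (acomp A v1) (acomp A (ameet A v0 (ameet A (acomp A v1) Z)))))) (eq_sym (S4_E116 A h0 h1 (ameet A (acomp A v1) (acomp A v0))))) (eq_trans (f_equal (fun Z : A => (ameet A v0 (ameet A (acomp A v1) (acomp A Z)))) (eq_sym (AX_A6 A h0 h1 (acomp A (acomp A (ameet A (acomp A v1) (acomp A v0)))) v0 (acomp A v1)))) (eq_trans (eq_sym (L_assoc A h0 h1 v0 (acomp A v1) (acomp A (ameet A (acomp A (acomp A (ameet A (acomp A v1) (acomp A v0)))) (ameet A v0 (acomp A v1)))))) (eq_trans (S4_E25 A h0 h1 (ameet A v0 (acomp A v1)) (acomp A (ameet A (acomp A v1) (acomp A v0)))) (eq_trans (f_equal (fun Z : A => (ameet A (acomp A (ameet A (acomp A v1) (acomp A v0))) (acomp A Z))) (S4_E12 A h0 h1 v0 v1)) (L_comm A h0 h1 (acomp A (ameet A (acomp A v1) (acomp A v0))) (acomp A v1))))))). Qed.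

Lemma S4_E329 (A : algebra) (h0 : HA6 A) (h1 : HJ A) : forall v0 v1 : A, (ameet A v0 (acomp A v0)) = (ameet A v1 (acomp A (ameet A v1 v1))).
Proof. intros v0 v1. exact (eq_trans (eq_sym (S4_E172 A h0 h1 v1 (acomp A (ameet A v1 (ameet A (acomp A v1) (ameet A (acomp A v1) (acomp A v1))))) v0)) (eq_trans (S4_E250 A h0 h1 v1 v1) (eq_trans (S4_E25 A h0 h1 (acomp A v1) v1) (eq_trans (S4_E28 A h0 h1 v1 (acomp A v1)) (f_equal (fun Z : A => (ameet A v1 (acomp A (ameet A v1 Z)))) (S4_E116 A h0 h1 v1)))))). Qed.

Lemma S4_E434 (A : algebra) (h0 : HA6 A) (h1 : HJ A) : forall v0 v1 v2 : A, (ameet A (acomp A (ameet A v0 v0)) (acomp A (ameet A v1 (ameet A v2 (acomp A v2))))) = (acomp A v0).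
Proof. intros v0 v1 v2. exact (eq_trans (f_equal (fun Z : A => (ameet A (acomp A (ameet A v0 v0)) (acomp A Z))) (S4_E171 A h0 h1 v1 v2 v0)) (S4_E122 A h0 h1 v0 v0)). Qed.

Lemma S4_E435 (A : algebra) (h0 : HA6 A) (h1 : HJ A) : forall v0 v1 : A, (acomp A (ameet A v0 (ameet A (acomp A v0) v1))) = (acomp A (ameet A v0 (acomp A v0))).
Proof. intros v0 v1. exact (eq_trans (f_equal (fun Z : A => (acomp A Z)) (eq_sym (L_assoc A h0 h1 v0 (acomp A v0) v1))) (eq_trans (eq_sym (S4_E434 A h0 h1 (ameet A (ameet A v0 (acomp A v0)) v1) (acomp A (ameet A v1 (ameet A (ameet A v0 (acomp A v0)) v1))) v0)) (S4_E154 A h0 h1 (ameet A (ameet A v0 (acomp A v0)) v1) (ameet A v0 (acomp A v0)) v1))). Qed.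

Lemma S4_E441 (A : algebra) (h0 : HA6 A) (h1 : HJ A) : forall v0 v1 : A, (ameet A v0 (acomp A (ameet A v1 (acomp A v1)))) = (ameet A v0 v0).
Proof. intros v0 v1. exact (eq_trans (f_equal (fun Z : A => (ameet A Z (acomp A (ameet A v1 (acomp A v1))))) (eq_sym (S4_E116 A h0 h1 v0))) (eq_trans (f_equal (fun Z : A => (ameet A (acomp A (acomp A v0)) (acomp A Z))) (eq_sym (S4_E172 A h0 h1 (acomp A v0) (acomp A (ameet A (acomp A (acomp A v0)) v0)) v1))) (eq_trans (S4_E15 A h0 h1 (acomp A v0) v0) (eq_trans (L_comm A h0 h1 (acomp A (acomp A v0)) v0) (f_equal (fun Z : A => (ameet A v0 Z)) (S4_E116 A h0 h1 v0)))))). Qed.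

Lemma S4_E645 (A : algebra) (h0 : HA6 A) (h1 : HJ A) : forall v0 v1 : A, (ameet A (acomp A (ameet A v0 v0)) (acomp A (ameet A v1 (acomp A (ameet A v1 v1))))) = (acomp A v0).
Proof. intros v0 v1. exact (eq_trans (f_equal (fun Z : A => (ameet A (acomp A (ameet A v0 v0)) (acomp A Z))) (eq_sym (S4_E329 A h0 h1 v0 v1))) (S4_E122 A h0 h1 v0 v0)). Qed.

Lemma S4_E651 (A : algebra) (h0 : HA6 A) (h1 : HJ A) : forall v0 : A, (ameet A v0 v0) = v0.
Proof. intros v0. exact (eq_trans (eq_sym (S4_E441 A h0 h1 v0 v0)) (eq_trans (f_equal (fun Z : A => (ameet A v0 Z)) (eq_sym (S4_E435 A h0 h1 v0 (acomp A v0)))) (eq_trans (S4_E131 A h0 h1 v0 (ameet A (acomp A v0) (acomp A v0))) (eq_trans (S4_E136 A h0 h1 v0 (ameet A (acomp A v0) (acomp A v0))) (eq_trans (S4_E645 A h0 h1 (acomp A v0) (acomp A v0)) (S4_E116 A h0 h1 v0)))))). Qed.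

Lemma S4_E657 (A : algebra) (h0 : HA6 A) (h1 : HJ A) : forall v0 v1 : A, (ameet A v0 (acomp A (ameet A v1 (acomp A v1)))) = v0.
Proof. intros v0 v1. exact (eq_trans (S4_E441 A h0 h1 v0 v1) (S4_E651 A h0 h1 v0)). Qed.

Lemma L_idem (A : algebra) (h0 : HA6 A) (h1 : HJ A) : forall v0 : A, (ameet A v0 v0) = v0.
Proof. intros v0. exact (S4_E651 A h0 h1 v0). Qed.

Lemma L_dn (A : algebra) (h0 : HA6 A) (h1 : HJ A) : forall v0 : A, (acomp A (acomp A v0)) = v0.
Proof. intros v0. exact (S4_E116 A h0 h1 v0). Qed.

Lemma L_one (A : algebra) (h0 : HA6 A) (h1 : HJ A) : forall v0 v1 : A, (ameet A (acomp A (ameet A v0 (acomp A v0))) v1) = v1.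
Proof. intros v0 v1. exact (eq_trans (L_comm A h0 h1 (acomp A (ameet A v0 (acomp A v0))) v1) (S4_E657 A h0 h1 v1 v0)). Qed.

Lemma L_split (A : algebra) (h0 : HA6 A) (h1 : HJ A) : forall v0 v1 : A, (acomp A (ameet A (acomp A (ameet A v1 v0)) (acomp A (ameet A (acomp A v1) v0)))) = v0.
Proof. intros v0 v1. exact (eq_trans (f_equal (fun Z : A => (acomp A (ameet A (acomp A Z) (acomp A (ameet A (acomp A v1) v0))))) (L_comm A h0 h1 v1 v0)) (eq_trans (f_equal (fun Z : A => (acomp A (ameet A (acomp A (ameet A v0 v1)) (acomp A Z)))) (L_comm A h0 h1 (acomp A v1) v0)) (eq_trans (f_equal (fun Z : A => (acomp A Z)) (S4_E122 A h0 h1 v0 v1)) (S4_E116 A h0 h1 v0)))). Qed.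

Section Complete.
Context (A : algebra) (h0 : HA6 A) (h1 : HJ A).

Local Notation "x * y" := (ameet A x y).
Local Notation "x ^'" := (acomp A x) (at level 2, format "x ^'").

Let comm := L_comm A h0 h1.
Let assoc := L_assoc A h0 h1.
Let idem := L_idem A h0 h1.
Let dn := L_dn A h0 h1.
Let one := L_one A h0 h1.
Let split := L_split A h0 h1.

Lemma zero_law : forall x y : A, x * x^' = y * y^'.
Proof.
  intros x y. apply (comp_inj A h1).
  transitivity ((y * y^')^' * (x * x^')^').
  - symmetry. apply one.
  - rewrite comm. apply one.
Qed.

Lemma zl : forall x y : A, (x * x^') * y = x * x^'.
Proof.
  intros x y. rewrite (zero_law x y).
  rewrite (assoc y (y^') y). rewrite (comm (y^') y).
  rewrite <- (assoc y y (y^')). rewrite (idem y). reflexivity.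
Qed.

Variable v : nat -> A.
Definition zz : A := v 0 * (v 0)^'.

Lemma zl' : forall w, zz * w = zz.
Proof. intro w. apply zl. Qed.
Lemma zr' : forall w, w * zz = zz.
Proof. intro w. rewrite comm. apply zl. Qed.

Definition lit (bb : bool) (a : A) : A := if bb then a else a^'.

Fixpoint atom (b : nat -> bool) (n : nat) : A :=
  match n with
  | 0 => lit (b 0) (v 0)
  | S k => atom b k * lit (b (S k)) (v (S k))
  end.

Lemma atom_ext : forall b b' n, (forall j, j <= n -> b j = b' j) -> atom b n = atom b' n.
Proof.
  intros b b' n; induction n as [|k IH]; intro H; simpl.
  - rewrite H by lia. reflexivity.
  - rewrite IH by (intros; apply H; lia). rewrite H by lia. reflexivity.
Qed.

Lemma absorb : forall b n i, i <= n -> atom b n * lit (b i) (v i) = atom b n.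
Proof.
  intros b n; induction n as [|k IH]; intros i Hi; simpl.
  - assert (i = 0) by lia. subst. apply idem.
  - destruct (Nat.eq_dec i (S k)) as [->|Hne].
    + rewrite assoc. rewrite idem. reflexivity.
    + rewrite assoc. rewrite (comm (lit (b (S k)) (v (S k)))).
      rewrite <- assoc. rewrite IH by lia. reflexivity.
Qed.

Lemma atom_var : forall b n i, i <= n -> atom b n * v i = if b i then atom b n else zz.
Proof.
  intros b n i Hi. pose proof (absorb b n i Hi) as Ha.
  destruct (b i) eqn:E; simpl in Ha.
  - exact Ha.
  - rewrite <- Ha. rewrite assoc. rewrite (comm ((v i)^') (v i)).
    rewrite (zero_law (v i) (v 0)). apply zr'.
Qed.

Fixpoint vb (t : term) (n : nat) : Prop :=
  match t with
  | Var i => i <= n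
  | Meet s u => vb s n /\ vb u n
  | Comp s => vb s n
  end.

Lemma atom_term : forall b n t, vb t n ->
  atom b n * eval A v t = if eval two b t then atom b n else zz.
Proof.
  intros b n t; induction t as [i|s IHs u IHu|s IHs]; simpl; intro Hv.
  - apply atom_var; exact Hv.
  - destruct Hv as [Hs Hu].
    assert (E : atom b n * (eval A v s * eval A v u) =
                (atom b n * eval A v s) * (atom b n * eval A v u)).
    { rewrite (assoc (atom b n) (eval A v s)).
      rewrite <- (assoc (eval A v s) (atom b n)).
      rewrite (comm (eval A v s) (atom b n)).
      rewrite (assoc (atom b n) (eval A v s)).
      rewrite <- (assoc (atom b n) (atom b n)). rewrite idem. reflexivity. }
    rewrite E, (IHs Hs), (IHu Hu).
    destruct (eval two b s), (eval two b u); simpl;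
      first [apply idem | apply zl' | apply zr' | reflexivity].
  - specialize (IHs Hv).
    destruct (eval two b s) eqn:Es; simpl.
    + rewrite <- IHs at 1. rewrite assoc.
      rewrite (zero_law (eval A v s) (v 0)). apply zr'.
    +
      pose proof (split (atom b n) (eval A v s)) as Hs.
      rewrite (comm (eval A v s) (atom b n)) in Hs. rewrite IHs in Hs.
      unfold zz in Hs. rewrite one in Hs. rewrite dn in Hs.
      rewrite comm. exact Hs.
Qed.

Lemma separate : forall n a c, (forall b, atom b n * a = atom b n * c) -> a = c.
Proof.
  induction n as [|k IH]; intros a c H.
  - pose proof (H (fun _ => true)) as Ht. pose proof (H (fun _ => false)) as Hf.
    simpl in Ht, Hf.
    rewrite <- (split a (v 0)), <- (split c (v 0)).
    rewrite Ht, Hf. reflexivity.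
  - assert (Hb : forall beta, lit beta (v (S k)) * a = lit beta (v (S k)) * c).
    { intro beta. apply IH. intro b.
      set (b' := fun j => if Nat.eqb j (S k) then beta else b j).
      pose proof (H b') as Hb'. cbn [atom] in Hb'.
      assert (Eb : atom b' k = atom b k).
      { apply atom_ext. intros j Hj. unfold b'.
        destruct (Nat.eqb_spec j (S k)); [lia | reflexivity]. }
      assert (Ebeta : b' (S k) = beta).
      { unfold b'. rewrite Nat.eqb_refl. reflexivity. }
      rewrite Eb, Ebeta in Hb'.
      rewrite !assoc in Hb'. exact Hb'. }
    pose proof (Hb true) as Ht. pose proof (Hb false) as Hf. simpl in Ht, Hf.
    rewrite <- (split a (v (S k))), <- (split c (v (S k))).
    rewrite Ht, Hf. reflexivity.
Qed.

End Complete.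

Fixpoint mv (t : term) : nat :=
  match t with
  | Var i => i
  | Meet s u => Nat.max (mv s) (mv u)
  | Comp s => mv s
  end.

Lemma vb_mv : forall t n, mv t <= n -> vb t n.
Proof.
  induction t as [i|s IHs u IHu|s IHs]; simpl; intros n H.
  - exact H.
  - split; [apply IHs | apply IHu]; lia.
  - apply IHs; exact H.
Qed.

Lemma completeness (A : algebra) (h0 : HA6 A) (h1 : HJ A) : in_BA A.
Proof.
  intros [s t] Hst v. unfold satisfies in *; simpl in *.
  apply (separate A h0 h1 v (Nat.max (mv s) (mv t))).
  intro b.
  rewrite (atom_term A h0 h1 v b _ s) by (apply vb_mv; lia).
  rewrite (atom_term A h0 h1 v b _ t) by (apply vb_mv; lia).
  rewrite (Hst b). reflexivity.
Qed.

Lemma models_H (A : algebra) : models A [A6; J5'] -> HA6 A /\ HJ A.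
Proof.
  intro H. split.
  - intros a b c.
    pose proof (H A6 (or_introl eq_refl) (fun n => match n with 0 => a | 1 => b | _ => c end)) as E.
    cbv [A6 fst snd eval x y z] in E. exact E.
  - intros a b.
    pose proof (H J5' (or_intror (or_introl eq_refl)) (fun n => match n with 0 => a | _ => b end)) as E.
    cbv [J5' fst snd eval x y z] in E. exact E.
Qed.

Lemma two_A6 : satisfies two A6.
Proof. intro v. cbv [A6 fst snd eval x y z two ameet]. destruct (v 0), (v 1), (v 2); reflexivity. Qed.
Lemma two_J : satisfies two J5'.
Proof. intro v. cbv [J5' fst snd eval x y z two ameet acomp]. destruct (v 0), (v 1); reflexivity. Qed.

Theorem theorem4p1 : is_n_base 2 [A6; J5'] in_BA.
Proof.
  split; [reflexivity|]. split.
  - intro A. split.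
    + intro H. destruct (models_H A H) as [h0 h1]. apply completeness; assumption.
    + intros H e He. destruct He as [<-|[<-|[]]].
      * apply H, two_A6.
      * apply H, two_J.
  - intros i d Hi. simpl in Hi.
    destruct i as [|[|i]]; [| | lia].
    + intro C. unfold consequence, remove_at in C. simpl in C.
      assert (M : models (Algebra bool (fun a _ => a) (fun a => a)) [J5']).
      { intros e [<-|[]] v. reflexivity. }
      specialize (C _ M (fun n => match n with 0 => true | _ => false end)).
      cbv in C. discriminate C.
    + intro C. unfold consequence, remove_at in C. simpl in C.
      assert (M : models (Algebra bool (fun _ _ => false) negb) [A6]).
      { intros e [<-|[]] v. reflexivity. }
      specialize (C _ M (fun _ => true)).
      cbv in C. discriminate C.
Qed.
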